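(* Let $G=(V,E)$ be a finite connected graph with $|V|=n$ and let $s:V\to\mathbb{R}$ satisfy $\sum_{x\in V}s(x)=n$. Then $s$ stabilizes to the all $1$ configuration, and the odometer of $s$ is the unique function $u:V\to\mathbb{R}$ satisfying $s+\Delta u=1$ and $\min u=0$.
   Context: $\Delta u(x)=\sum_{y\sim x}(u(y)-u(x))$. $\mathcal{F}_s=\{f:V\to\mathbb{R}: f\ge0,\ s+\Delta f\le1\}$; $s$ stabilizes if $\mathcal{F}_s\ne\emptyset$; the odometer is $u(x)=\inf\{f(x):f\in\mathcal{F}_s\}$; ''stabilizes to the all $1$ configuration'' means $s+\Delta u\equiv1$ for the odometer $u$. *)

(* Defs.v *)
From HB Require Import structures.
From mathcomp Require Import all_boot all_order all_algebra.
From mathcomp Require Import boolp classical_sets reals.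
Set Implicit Arguments. Unset Strict Implicit. Unset Printing Implicit Defensive.
Import Order.TTheory GRing.Theory Num.Theory.
Local Open Scope ring_scope.
Local Open Scope classical_set_scope.

Definition simple_graph (V : finType) (e : rel V) : Prop :=
  symmetric e /\ irreflexive e.

Definition connected_graph (V : finType) (e : rel V) : Prop :=
  (0 < #|V|)%N /\ forall x y : V, connect e x y.

Definition lap (R : realType) (V : finType) (e : rel V) (u : V -> R) : V -> R :=
  fun x => \sum_(y | e x y) (u y - u x).

Definition Fs (R : realType) (V : finType) (e : rel V) (s : V -> R) : set (V -> R) :=
  [set f | (forall x, 0 <= f x) /\ (forall x, s x + lap e f x <= 1)].

Definition stabilizes (R : realType) (V : finType) (e : rel V) (s : V -> R) : Prop :=
  Fs e s !=set0.

Definition odometer (R : realType) (V : finType) (e : rel V) (s : V -> R) : V -> R :=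
  fun x => inf [set f x | f in Fs e s].

Definition stabilizes_to_one (R : realType) (V : finType) (e : rel V) (s : V -> R) : Prop :=
  stabilizes e s /\ forall x, s x + lap e (odometer e s) x = 1.

(* Main.v *)
Require Import Defs.
From HB Require Import structures.
From mathcomp Require Import all_boot all_order all_algebra.
From mathcomp Require Import boolp classical_sets reals.
From mathcomp Require Import ring lra zify.
Import Order.TTheory GRing.Theory Num.Theory.
Set Implicit Arguments. Unset Strict Implicit.
Local Open Scope ring_scope.

Lemma sum_enum (R : realType) (V : finType) (F : V -> R) :
  \sum_z F z = \sum_(i < #|V|) F (enum_val i).
Proof. by rewrite -big_enum_val. Qed.

Definition toR (R : realType) (V : finType) (g : V -> R) : 'rV[R]_#|V| :=
  \row_j g (enum_val j).
Definition ofR (R : realType) (V : finType) (u : 'rV[R]_#|V|) : V -> R :=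
  fun y => u 0 (enum_rank y).
Definition Lmx (R : realType) (V : finType) (e : rel V) : 'M[R]_#|V| :=
  \matrix_(i, j) ((e (enum_val j) (enum_val i))%:R
     - (i == j)%:R * \sum_(k < #|V|) (e (enum_val j) (enum_val k))%:R).

Arguments Lmx R {V} e.

Lemma Lmx_mul (R : realType) (V : finType) (e : rel V) (u : 'rV[R]_#|V|) :
  u *m Lmx R e = toR (lap e (ofR u)).
Proof.
apply/rowP => j; rewrite !mxE /lap /ofR [RHS]big_mkcond /= [RHS]sum_enum.
transitivity (\sum_(i < #|V|) (e (enum_val j) (enum_val i))%:R * (u 0 i - u 0 j)); last first.
  by apply: eq_bigr => i _; rewrite !enum_valK; case: (e _ _); rewrite ?mul1r ?mul0r.
rewrite /Lmx; under eq_bigr do rewrite mxE mulrBr.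
under [X in _ = X]eq_bigr do rewrite mulrBr.
rewrite !sumrB; congr (_ - _); first by apply: eq_bigr => i _; rewrite mulrC.
rewrite [LHS](bigD1 j) //= [X in _ + X = _]big1 ?addr0; last first.
  by move=> i /negbTE ->; rewrite mul0r mulr0.
rewrite eqxx mul1r mulr_sumr; apply: eq_bigr => i _; by rewrite mulrC.
Qed.
Lemma lap_sum (R : realType) (V : finType) (e : rel V) (g : V -> R) :
  symmetric e -> \sum_x lap e g x = 0.
Proof.
move=> sym; rewrite /lap.
set S := \sum_x _.
have HS : S = - S.
  rewrite /S (eq_bigr (fun x => \sum_y (e x y)%:R * (g y - g x))); last first.
    by move=> x _; rewrite big_mkcond /=; apply: eq_bigr => y _; case: (e x y); rewrite ?mul1r ?mul0r.
  rewrite [LHS]exchange_big /= -sumrN; apply: eq_bigr => x _; rewrite -sumrN.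
  apply: eq_bigr => y _; by rewrite sym; case: (e x y); rewrite ?mul1r ?mul0r ?oppr0 ?opprB.
have : S *+ 2 = 0 by rewrite mulr2n {1}HS addNr.
by move/eqP; rewrite mulrn_eq0 /= => /eqP.
Qed.

Lemma lap_harm_const (R : realType) (V : finType) (e : rel V) (g : V -> R) :
  symmetric e -> connected_graph e -> (forall x, lap e g x = 0) ->
  forall x y, g x = g y.
Proof.
move=> sym [Hn Hc] Hh.
have [x0 _] : exists x0 : V, true.
  by have /card_gt0P [x _] := Hn; exists x.
set m := [arg max_(i > x0) g i]%O.
have Hm : forall y, g y <= g m.
  by rewrite /m; case: (arg_maxP g (isT : predT x0)) => i _ H y; apply: H.
have cl : forall y z, e y z -> g y = g m -> g z = g m.
  move=> y z eyz gy.
  have := Hh y; rewrite /lap => H0.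
  have H1 : \sum_(w | e y w) (g m - g w) = 0.
    rewrite -{}gy; apply: (@oppr_inj _); rewrite oppr0 -sumrN -[RHS]H0.
    by apply: eq_bigr => w _; rewrite opprB.
  have H2 : forall w, e y w -> 0 <= g m - g w by move=> w _; rewrite subr_ge0.
  have /eqP := psumr_eq0P H2 H1 eyz.
  by rewrite subr_eq0 => /eqP.
have clo : closed e [pred y | g y == g m].
  move=> y z eyz /=; apply/eqP/eqP => H; first exact: cl eyz H.
  by apply: (cl z y) => //; rewrite sym.
have all : forall y, g y = g m.
  move=> y; have := closed_connect clo (Hc m y); rewrite !inE eqxx.
  by move/esym/eqP.
by move=> x y; rewrite !all.
Qed.

Lemma lap_surj (R : realType) (V : finType) (e : rel V) :
  symmetric e -> connected_graph e -> forall t : V -> R, \sum_x t x = 0 ->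
  exists w : V -> R, forall x, lap e w x = t x.
Proof.
move=> sym Hcon t Ht.
have Hn := Hcon.1.
pose n := #|V|.
pose L := Lmx R e.
pose o : 'cV[R]_#|V| := const_mx 1.
have Lo : forall u : 'rV[R]_#|V|, u *m L *m o = 0.
  move=> u; rewrite /L Lmx_mul; apply/rowP => k; rewrite !mxE.
  under eq_bigr do rewrite !mxE mulr1.
  by rewrite -sum_enum lap_sum.
have LS : (L <= kermx o)%MS.
  apply/sub_kermxP; apply/row_matrixP => i; rewrite row_mul rowE row0.
  exact: Lo.
have ro : \rank o = 1%N.
  apply/eqP; rewrite eqn_leq rank_leq_col /= lt0n mxrank_eq0.
  apply/eqP => /matrixP /(_ (Ordinal Hn) 0); rewrite !mxE => /eqP.
  by rewrite oner_eq0.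
have rS : \rank (kermx o) = (#|V| - 1)%N by rewrite mxrank_ker ro.
have kerL : (kermx L <= (const_mx 1 : 'rV[R]_#|V|))%MS.
  apply/row_subP => i.
  set r := row i (kermx L).
  have rL : r *m L = 0 by rewrite /r -row_mul mulmx_ker row0.
  clearbody r.
  have hr : forall x, lap e (ofR r) x = 0.
    move=> x; move: rL; rewrite /L Lmx_mul => /rowP /(_ (enum_rank x)).
    by rewrite !mxE enum_rankK.
  have hc := lap_harm_const sym Hcon hr.
  have -> : r = (r 0 (Ordinal Hn)) *: const_mx 1.
    apply/rowP => j; rewrite !mxE mulr1.
    have := hc (enum_val j) (enum_val (Ordinal Hn)).
    by rewrite /ofR !enum_valK.
  exact: scalemx_sub.
have rL : (#|V| - 1 <= \rank L)%N.
  have := mxrankS kerL; rewrite mxrank_ker.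
  have := rank_leq_row (const_mx 1 : 'rV[R]_#|V|).
  move=> h1 h2; lia.
have SL : (kermx o <= L)%MS.
  rewrite -(geq_leqif (mxrank_leqif_sup LS)) rS; exact: rL.
have tS : (toR t <= kermx o)%MS.
  apply/sub_kermxP; apply/rowP => k; rewrite !mxE.
  under eq_bigr do rewrite !mxE mulr1.
  by rewrite -sum_enum Ht.
have /submxP [D HD] := submx_trans tS SL.
exists (ofR D) => x.
move: HD; rewrite /L Lmx_mul => /rowP /(_ (enum_rank x)).
by rewrite !mxE enum_rankK => ->.
Qed.

Lemma lap_shift (R : realType) (V : finType) (e : rel V) (g : V -> R) c x :
  lap e (fun y => g y + c) x = lap e g x.
Proof. by apply: eq_bigr => y _; rewrite opprD addrACA subrr addr0. Qed.

Lemma lap_sub (R : realType) (V : finType) (e : rel V) (f g : V -> R) x :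
  lap e (fun y => f y - g y) x = lap e f x - lap e g x.
Proof. rewrite /lap -sumrB; apply: eq_bigr => y _; ring. Qed.

Theorem lemma7p1 (R : realType) (V : finType) (e : rel V)
  (Hsimple : simple_graph e) (Hconn : connected_graph e) (s : V -> R)
  (Hsum : \sum_(x : V) s x = (#|V|)%:R) :
  stabilizes_to_one e s /\
  ((forall x, s x + lap e (odometer e s) x = 1) /\
   (forall x, 0 <= odometer e s x) /\ (exists x, odometer e s x = 0)) /\
  (forall u : V -> R,
     (forall x, s x + lap e u x = 1) ->
     (forall x, 0 <= u x) -> (exists x, u x = 0) ->
     forall x, u x = odometer e s x).
Proof.
have sym := Hsimple.1.
have Ht : \sum_x (1 - s x) = 0.
  by rewrite sumrB Hsum sumr_const subrr.
have [w Hw] := lap_surj sym Hconn Ht.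
have [x0 _] : exists x0 : V, true.
  by have /card_gt0P [x _] := Hconn.1; exists x.
set m := [arg min_(i < x0) w i]%O.
have Hm : forall y, w m <= w y.
  by rewrite /m; case: (arg_minP w (isT : predT x0)) => i _ H y; apply: H.
pose u0 := fun y => w y + - w m.
have u0m : u0 m = 0 by rewrite /u0 subrr.
have u0ge : forall y, 0 <= u0 y by move=> y; rewrite /u0 subr_ge0.
have lu0 : forall y, lap e u0 y = 1 - s y by move=> y; rewrite /u0 lap_shift Hw.
have u0F : Fs e s u0.
  by split => // y; rewrite lu0 addrC subrK.
have key : forall f, Fs e s f -> forall y, f y = u0 y + f m.
  move=> f [f0 f1].
  have hs : \sum_y (1 - (s y + lap e f y)) = 0.
    by rewrite sumrB big_split /= lap_sum // addr0 Hsum sumr_const subrr.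
  have eq1 : forall y, lap e f y = lap e u0 y.
    have nn : forall z, predT z -> 0 <= 1 - (s z + lap e f z) by move=> z _; rewrite subr_ge0.
    move=> y; have /eqP := psumr_eq0P nn hs (isT : predT y).
    by rewrite lu0 subr_eq0 => /eqP ->; rewrite addrC addKr.
  have hh : forall y, lap e (fun z => f z - u0 z) y = 0.
    by move=> y; rewrite lap_sub eq1 subrr.
  move=> y; have := lap_harm_const sym Hconn hh y m.
  by rewrite u0m subr0 => <-; rewrite addrC subrK.
have Hod : odometer e s = u0.
  apply: funext => x; rewrite /odometer; apply/le_anti/andP; split.
    apply: (ge_inf); first by exists 0 => _ [f [f0 _] <-].
    by exists u0.
  apply: lb_le_inf; first by exists (u0 x), u0.
  move=> _ [f Hf <-]; rewrite (key f Hf x) lerDl; exact: Hf.1.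
rewrite /stabilizes_to_one Hod.
have one : forall x, s x + lap e u0 x = 1 by move=> x; rewrite lu0 addrC subrK.
split; first by split; [exists u0 | exact: one].
split; first by split; [exact: one | split; [exact: u0ge | exists m]].
move=> u Hu1 Hu0 [x1 Hx1] x.
have uF : Fs e s u by split => // y; rewrite Hu1.
have um : u m = 0.
  have := key u uF x1; rewrite Hx1 => /esym/eqP; rewrite paddr_eq0 ?Hu0 ?u0ge //.
  by case/andP => _ /eqP.
by rewrite (key u uF x) um addr0.
Qed.
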